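(* Let $w$ and $w'$ be binary words. If $G(w)$ is not an identity permutation, then $G(w')$ contains $G(w)$ as a pattern if and only if $w'$ contains $w$ as a (not necessarily contiguous) subsequence. If $G(w)$ is the identity permutation $\operatorname{id}_k = 12\cdots k$ of size $k$, then $G(w')$ contains $\operatorname{id}_k$ if and only if $w'$ contains $0^j1^{k-j}$ as a subsequence for some $j \in \{0,1,\dots,k\}$.
   Context: For a binary word $w = w_1\cdots w_n$, let $A = \{i \in [n] : w_i = 0\}$ with $|A| = a$. The permutation $G(w)$ of $[n]$ (one-line notation) has as its first $a$ entries the elements of $A$ in increasing order, followed by the elements of $[n]\setminus A$ in increasing order. Every Grassmannian permutation (at most one descent) arises this way. A permutation $\sigma$ of $[n]$ contains a permutation $\pi$ of $[m]$ if there are indices $h(1)<\dots<h(m)$ with $\sigma_{h(i)}<\sigma_{h(j)}$ iff $\pi_i<\pi_j$; otherwise $\sigma$ avoids $\pi$. $0^j$ denotes $j$ consecutive zeros, and similarly $1^j$. *)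

(* Defs.v *)
From mathcomp Require Import all_boot.
Set Implicit Arguments. Unset Strict Implicit. Unset Printing Implicit Defensive.

(* Binary words are [seq bool], with letter 0 encoded as [false] and
   letter 1 as [true].  Positions of a word w are 1..size w.
   Permutations of [n] are given in one-line notation as [seq nat]
   (values in 1..n). *)

Definition G (w : seq bool) : seq nat :=
  [seq i.+1 | i <- iota 0 (size w) & ~~ nth false w i] ++
  [seq i.+1 | i <- iota 0 (size w) & nth false w i].

Definition idperm (k : nat) : seq nat := iota 1 k.

Definition contains_pattern (sigma pi : seq nat) : Prop :=
  exists h : seq nat,
    [/\ size h = size pi, sorted ltn h, all (fun x => x < size sigma) h &
      forall i j, i < size pi -> j < size pi ->
        (nth 0 sigma (nth 0 h i) < nth 0 sigma (nth 0 h j)) = (nth 0 pi i < nth 0 pi j)].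

(* Main.v *)
Require Import Defs.
From mathcomp Require Import all_boot zify.
Set Implicit Arguments. Unset Strict Implicit.
Ltac mylia := repeat match goal with |- context [?x.-1] => rewrite -(subn1 x) | H : context [?x.-1] |- _ => rewrite -(subn1 x) in H end; lia.

Definition Zs (u : seq bool) := [seq i.+1 | i <- iota 0 (size u) & ~~ nth false u i].
Definition Os (u : seq bool) := [seq i.+1 | i <- iota 0 (size u) & nth false u i].

Lemma G_cat u : G u = Zs u ++ Os u. Proof. by []. Qed.

Lemma size_ZO u : size (Zs u) + size (Os u) = size u.
Proof.
rewrite /Zs /Os !size_map !size_filter addnC.
have := count_predC (fun i => nth false u i) (iota 0 (size u)).
by rewrite size_iota.
Qed.

Lemma size_G u : size (G u) = size u.
Proof. by rewrite G_cat size_cat size_ZO. Qed.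

Lemma memZ u x : (x \in Zs u) = [&& 0 < x, x <= size u & ~~ nth false u x.-1].
Proof.
apply/mapP/idP.
  move=> [i]; rewrite mem_filter mem_iota /= => /andP[hi hr] ->.
  by rewrite /= hi; lia.
case: x => // x /and3P[_ hx hn]; exists x => //.
by rewrite mem_filter mem_iota hn /=; lia.
Qed.

Lemma memO u x : (x \in Os u) = [&& 0 < x, x <= size u & nth false u x.-1].
Proof.
apply/mapP/idP.
  move=> [i]; rewrite mem_filter mem_iota /= => /andP[hi hr] ->.
  by rewrite /= hi; lia.
case: x => // x /and3P[_ hx hn]; exists x => //.
by rewrite mem_filter mem_iota hn /=; lia.
Qed.

Lemma mem_G u x : (x \in G u) = (0 < x <= size u).
Proof.
rewrite G_cat mem_cat memZ memO.
by case: (nth false u x.-1); rewrite ?andbT ?andbF ?orbF.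
Qed.

Lemma sortedZ u : sorted ltn (Zs u).
Proof.
rewrite sorted_map; apply: sorted_filter.
  by move=> a b c /=; apply: ltn_trans.
exact: iota_ltn_sorted.
Qed.

Lemma sortedO u : sorted ltn (Os u).
Proof.
rewrite sorted_map; apply: sorted_filter.
  by move=> a b c /=; apply: ltn_trans.
exact: iota_ltn_sorted.
Qed.

Lemma G_letter u x : x < size u ->
  [/\ 0 < nth 0 (G u) x, nth 0 (G u) x <= size u &
      nth false u (nth 0 (G u) x).-1 = ~~ (x < size (Zs u))].
Proof.
move=> hx; rewrite G_cat nth_cat.
case: (ltnP x (size (Zs u))) => ha.
  have := mem_nth 0 ha; rewrite memZ => /and3P[h1 h2 h3].
  by split => //; apply/negbTE.
have hb : x - size (Zs u) < size (Os u) by have := size_ZO u; lia.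
have := mem_nth 0 hb; rewrite memO => /and3P[h1 h2 h3].
by split.
Qed.

Lemma G_mono u x y : x < y -> y < size u ->
  (x < size (Zs u)) = (y < size (Zs u)) -> nth 0 (G u) x < nth 0 (G u) y.
Proof.
move=> hxy hy; rewrite G_cat !nth_cat.
case: (ltnP x (size (Zs u))) => hx; case: (ltnP y (size (Zs u))) => hy' // _.
  by apply: (sorted_ltn_nth ltn_trans 0 (sortedZ u)).
have := size_ZO u => hs.
apply: (sorted_ltn_nth ltn_trans 0 (sortedO u)); rewrite ?inE; lia.
Qed.

Definition emb (s t : seq bool) (q : nat -> nat) :=
  (forall i j, i < j -> j < size s -> q i < q j) /\
  (forall i, i < size s -> q i < size t /\ nth false t (q i) = nth false s i).

Lemma subseq_emb s t : subseq s t -> exists q, emb s t q.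
Proof.
elim: t s => [|x t IH] s.
  rewrite subseq0 => /eqP ->; exists id; split => //.
case: s => [|y s].
  by move=> _; exists id; split.
rewrite /=; case: eqP => [->|hne] /IH [q [h1 h2]].
  exists (fun i => if i is i'.+1 then (q i').+1 else 0); split.
    case=> [|i] [|j] //= hij hj.
    by rewrite ltnS; apply: h1.
  case=> [|i] /= hi; first by [].

  by have [? ?] := h2 i hi; split.
exists (fun i => (q i).+1); split.
  by move=> i j hij hj; rewrite ltnS; apply: h1.
by move=> i hi; have [? ?] := h2 i hi; split.
Qed.

Lemma emb_subseq s t q : emb s t q -> subseq s t.
Proof.
elim: t s q => [|x t IH] s q.
  case: s => [|y s] // [_ h2].
  by have [] := h2 0 isT.
case: s => [|y s] [h1 h2]; first exact: sub0seq.
have q0 : forall i, i < size (y :: s) -> q 0 <= q i.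
  by case=> // i hi; apply: ltnW; apply: h1.
case: (posnP (q 0)) => hq0.
  have [_ e0] := h2 0 isT; rewrite hq0 /= in e0; rewrite /= e0 eqxx.
  apply: (IH _ (fun i => (q i.+1).-1)); split.
    move=> i j hij hj.
    have := h1 i.+1 j.+1 hij hj; have := h1 0 i.+1 isT (ltn_trans hij hj); lia.
  move=> i hi; have := h1 0 i.+1 isT hi; have [hh e] := h2 i.+1 hi.
  move=> hp; split; first by simpl in hh; lia.
  rewrite /= in e; rewrite -e /=; case: (q i.+1) hp => //.
apply: (subseq_trans _ (subseq_cons t x)).
apply: (IH _ (fun i => (q i).-1)); split.
  move=> i j hij hj; have := h1 i j hij hj; have := q0 i (ltn_trans hij hj); lia.
move=> i hi; have := q0 i hi; have [hh e] := h2 i hi => hp.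
split; first by simpl in hh; lia.
rewrite -e; case: (q i) hp hq0 => //; lia.
Qed.

Lemma L1 (u w' : seq bool) (h : seq nat) :
  size h = size u -> all (fun x => x < size (G w')) h ->
  (forall i j, i < size u -> j < size u ->
    (nth 0 (G w') (nth 0 h i) < nth 0 (G w') (nth 0 h j)) = (nth 0 (G u) i < nth 0 (G u) j)) ->
  (forall i, i < size u -> (nth 0 h i < size (Zs w')) = (i < size (Zs u))) ->
  subseq u w'.
Proof.
move=> hs hall hc hb.
have Hk : forall k, k < size u ->
    index k.+1 (G u) < size u /\ nth 0 (G u) (index k.+1 (G u)) = k.+1.
  move=> k hk; have hm : k.+1 \in G u by rewrite mem_G; mylia.
  by split; [rewrite -(size_G u) index_mem | exact: nth_index].
have Hh : forall i, i < size u -> nth 0 h i < size w'.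
  by move=> i hi; rewrite -(size_G w'); apply: (all_nthP 0 hall); rewrite hs.
apply: (@emb_subseq _ _ (fun k => (nth 0 (G w') (nth 0 h (index k.+1 (G u)))).-1)); split.
  move=> k l hkl hl; have [hi ei] := Hk k (ltn_trans hkl hl); have [hj ej] := Hk l hl.
  have := hc _ _ hi hj; rewrite ei ej ltnS hkl => hlt.
  have [p1 _ _] := G_letter (Hh _ hi); mylia.
move=> k hk; have [hi ei] := Hk k hk; have [p1 p2 p3] := G_letter (Hh _ hi).
split; first mylia.
rewrite p3 hb //; have [_ _ l3] := G_letter hi.
by rewrite ei /= in l3; rewrite l3.
Qed.

Lemma L2 (u w' : seq bool) : subseq u w' -> contains_pattern (G w') (G u).
Proof.
move=> /subseq_emb [q [h1 h2]].
have q_lt : forall x y, x < size u -> y < size u -> (q x < q y) = (x < y).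
  move=> x y hx hy; case: (ltngtP x y) => hxy.
  - exact: h1.
  - by have := h1 _ _ hxy hx; mylia.
  - by rewrite hxy ltnn.
have Hv : forall i, i < size u -> (q (nth 0 (G u) i).-1).+1 \in G w'.
  move=> i hi; have [l1 l2 _] := G_letter hi; rewrite mem_G.
  have hp : (nth 0 (G u) i).-1 < size u by mylia.
  by have [? _] := h2 _ hp; apply/andP; split.
have Hlet : forall i, i < size u ->
    nth false w' (q (nth 0 (G u) i).-1) = ~~ (i < size (Zs u)).
  move=> i hi; have [l1 l2 l3] := G_letter hi.
  have hp : (nth 0 (G u) i).-1 < size u by mylia.
  by have [_ ->] := h2 _ hp.
set h := [seq index (q x.-1).+1 (G w') | x <- G u].
have Hn : forall i, i < size u -> nth 0 h i = index (q (nth 0 (G u) i).-1).+1 (G w').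
  by move=> i hi; rewrite /h (nth_map 0) // size_G.
have Hs : forall i, i < size u -> nth 0 h i < size w'.
  by move=> i hi; rewrite Hn // -(size_G w') index_mem Hv.
have Hsig : forall i, i < size u -> nth 0 (G w') (nth 0 h i) = (q (nth 0 (G u) i).-1).+1.
  by move=> i hi; rewrite Hn // nth_index // Hv.
have Hblk : forall i, i < size u -> (nth 0 h i < size (Zs w')) = (i < size (Zs u)).
  move=> i hi; have [_ _ l3] := G_letter (Hs i hi).
  rewrite Hsig //= Hlet // in l3.
  by apply: negb_inj; rewrite l3.
have Hcmp : forall i j, i < size u -> j < size u ->
   (nth 0 (G w') (nth 0 h i) < nth 0 (G w') (nth 0 h j)) = (nth 0 (G u) i < nth 0 (G u) j).
  move=> i j hi hj; rewrite !Hsig // ltnS q_lt.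
  - have [l1 _ _] := G_letter hi; have [l1' _ _] := G_letter hj; mylia.
  - have [l1 l2 _] := G_letter hi; mylia.
  - have [l1 l2 _] := G_letter hj; mylia.
exists h; split.
- by rewrite /h size_map !size_G.
- apply/(sortedP 0) => i; rewrite /h size_map size_G -/h => hi.
  have hi0 : i < size u by mylia.
  have hsX := Hs i hi0; have hsY := Hs i.+1 hi.
  have bX := Hblk i hi0; have bY := Hblk i.+1 hi.
  have [hsame|[d1 d2]] : ((i < size (Zs u)) = (i.+1 < size (Zs u))) \/
        (i < size (Zs u) /\ ~~ (i.+1 < size (Zs u))).
    case: (boolP (i < size (Zs u))) => c1; case: (boolP (i.+1 < size (Zs u))) => c2.
    - by left.
    - by right.
    - by exfalso; move/negP: c1; apply; lia.
    - by left; rewrite ?(negbTE c1) ?(negbTE c2).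
  + have m1 := G_mono (ltnSn i) hi hsame.
    rewrite -Hcmp // in m1.
    case: (ltngtP (nth 0 h i) (nth 0 h i.+1)) => // hXY.
      have m2 := G_mono hXY hsX (etrans (etrans bY (esym hsame)) (esym bX)).
      by move: m1; rewrite ltnNge ltnW.
    by move: m1; rewrite hXY ltnn.
  + move: bX bY; rewrite d1 (negbTE d2) => /idP bX /negbT bY; lia.
- apply/(all_nthP 0) => i; rewrite /h size_map size_G -/h => hi.
  by rewrite size_G; apply: Hs.
- by move=> i j; rewrite size_G; apply: Hcmp.
Qed.

Lemma G_sorted_id (u : seq bool) :
  (forall p q, p < q -> q < size u -> nth false u p -> nth false u q) ->
  G u = iota 1 (size u).
Proof.
move=> hmono.
apply: (irr_sorted_eq ltn_trans ltnn _ (iota_ltn_sorted 1 (size u))); last first.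
  by move=> x; rewrite mem_G mem_iota; lia.
apply/(sortedP 0) => i; rewrite size_G => hi.
have hi0 : i < size u by lia.
case: (boolP ((i < size (Zs u)) == (i.+1 < size (Zs u)))) => [/eqP hs|hd].
  exact: G_mono.
have [d1 d2] : i < size (Zs u) /\ ~~ (i.+1 < size (Zs u)).
  move: hd; case: (boolP (i < size (Zs u))) => c1; case: (boolP (i.+1 < size (Zs u))) => c2 //.
  by move/negP: c1; lia.
have [l1 l2 l3] := G_letter hi0; have [m1 m2 m3] := G_letter hi.
rewrite d1 /= in l3; rewrite (negbTE d2) /= in m3.
case: (ltngtP (nth 0 (G u) i) (nth 0 (G u) i.+1)) => // hc.
  have hp : (nth 0 (G u) i.+1).-1 < (nth 0 (G u) i).-1 by mylia.
  have hq : (nth 0 (G u) i).-1 < size u by mylia.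
  by have := hmono _ _ hp hq; rewrite l3 m3 => /(_ isT).
by move: l3; rewrite hc m3.
Qed.

Lemma nth_u j k p : p < k ->
  nth false (nseq j false ++ nseq (k - j) true) p = (j <= p).
Proof.
move=> hp; rewrite nth_cat size_nseq.
case: ltnP => h1; first by rewrite nth_nseq; case: ifP.
rewrite nth_nseq ifT //; lia.
Qed.

Lemma G_u j k : j <= k ->
  G (nseq j false ++ nseq (k - j) true) = iota 1 k /\
  size (Zs (nseq j false ++ nseq (k - j) true)) = j.
Proof.
move=> hjk; set u := nseq j false ++ nseq (k - j) true.
have su : size u = k by rewrite /u size_cat !size_nseq; lia.
have hG : G u = iota 1 k.
  rewrite -[in RHS]su; apply: G_sorted_id => p q hpq hq; rewrite su in hq.
  have hp' : p < k by lia.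
  by rewrite !nth_u // => ?; lia.
split => //.
have ha := size_ZO u; rewrite su in ha.
have key : forall x, x < k -> (j <= x) = ~~ (x < size (Zs u)).
  move=> x hx; have hx' : x < size u by rewrite su.
  have [_ _ l3] := G_letter hx'.
  by rewrite hG nth_iota // add1n /= nth_u in l3.
case: (ltngtP (size (Zs u)) j) => // hc.
  by have := key _ (leq_trans hc hjk); rewrite ltnn /= => /idP; lia.
have hj : j < k by lia.
by have := key j hj; rewrite leqnn hc.
Qed.

Lemma inversion (u : seq bool) : G u <> idperm (size u) ->
  exists p q, [/\ p < q, q < size u, nth false u p & ~~ nth false u q].
Proof.
move=> hne.
case: (boolP (has (fun p => has (fun q => [&& p < q, nth false u p & ~~ nth false u q])
          (iota 0 (size u))) (iota 0 (size u)))).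
  move=> /hasP [p _ /hasP [q]]; rewrite mem_iota => hq /and3P[h1 h2 h3].
  by exists p, q; split => //; lia.
move=> /hasPn hn; exfalso; apply: hne; apply: G_sorted_id => p q hpq hq hp.
have hp' : p \in iota 0 (size u) by rewrite mem_iota; lia.
have hq' : q \in iota 0 (size u) by rewrite mem_iota; lia.
have := hn p hp' => /hasPn /(_ q hq').
by rewrite hpq hp /= negbK.
Qed.

Lemma sorted_lt (h : seq nat) i j : sorted ltn h -> i < j -> j < size h ->
  nth 0 h i < nth 0 h j.
Proof.
move=> hs hij hj; apply: (sorted_ltn_nth ltn_trans 0 hs) => //; rewrite inE //.
exact: ltn_trans hij hj.
Qed.

Lemma sorted_le (h : seq nat) i j : sorted ltn h -> i <= j -> j < size h ->
  nth 0 h i <= nth 0 h j.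
Proof.
move=> hs; rewrite leq_eqVlt => /orP[/eqP -> //|hij] hj.
exact/ltnW/sorted_lt.
Qed.

Lemma L3 (w w' : seq bool) (h : seq nat) :
  G w <> idperm (size w) -> size h = size w -> sorted ltn h ->
  all (fun x => x < size (G w')) h ->
  (forall i j, i < size w -> j < size w ->
    (nth 0 (G w') (nth 0 h i) < nth 0 (G w') (nth 0 h j)) = (nth 0 (G w) i < nth 0 (G w) j)) ->
  forall i, i < size w -> (nth 0 h i < size (Zs w')) = (i < size (Zs w)).
Proof.
move=> hne hs hsort hall hc.
have [p [q [hpq hq hp hq0]]] := inversion hne.
have Hh : forall i, i < size w -> nth 0 h i < size w'.
  by move=> i hi; rewrite -(size_G w'); apply: (all_nthP 0 hall); rewrite hs.
have hm : forall x, x < size w ->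
    index x.+1 (G w) < size w /\ nth 0 (G w) (index x.+1 (G w)) = x.+1.
  move=> k hk; have hmm : k.+1 \in G w by rewrite mem_G; lia.
  by split; [rewrite -(size_G w) index_mem | exact: nth_index].
have [hi0 ei0] := hm q hq; have [hj0 ej0] := hm p (ltn_trans hpq hq).
set i0 := index q.+1 (G w) in hi0 ei0; set j0 := index p.+1 (G w) in hj0 ej0.
set a := size (Zs w); set a' := size (Zs w').
have ha0 : i0 < a.
  have [_ _ l3] := G_letter hi0; rewrite ei0 /= in l3.
  by move: l3; rewrite (negbTE hq0); case: (i0 < a).
have hj0a : a <= j0.
  have [_ _ l3] := G_letter hj0; rewrite ej0 /= -/a in l3.
  by move: l3; rewrite hp; case: (ltnP j0 a).
set d := a.-1.
have hd : d < a by rewrite /d; lia.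
have hda1 : a = d.+1 by rewrite /d; lia.
have ham : a < size w by lia.
have hdm : d < size w by lia.
have e1 : nth 0 (G w) i0 <= nth 0 (G w) d.
  rewrite leq_eqVlt; case: (ltngtP i0 d) => hh.
  - by rewrite G_mono ?orbT // ha0 hd.
  - by lia.
  - by rewrite hh eqxx.
have e2 : nth 0 (G w) a <= nth 0 (G w) j0.
  rewrite leq_eqVlt; case: (ltngtP a j0) => hh.
  - by rewrite G_mono ?orbT // ltnn ltnNge hj0a.
  - by lia.
  - by rewrite hh eqxx.
have hlt : nth 0 (G w) a < nth 0 (G w) d by lia.
have c := hc a d ham hdm; rewrite hlt in c.
have hda : nth 0 h d < nth 0 h a by apply: sorted_lt; rewrite ?hs.
have hdA : nth 0 h d < a'.
  case: (ltnP (nth 0 h d) a') => // hge.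
  have := G_mono hda (Hh a ham).
  rewrite !ltnNge hge (leq_trans hge (ltnW hda)) => /(_ erefl).
  by move: c => /idP; lia.
have haA : a' <= nth 0 h a.
  case: (ltnP (nth 0 h a) a') => // hge.
  have := G_mono hda (Hh a ham).
  rewrite hge (ltn_trans hda hge) => /(_ erefl).
  by move: c => /idP; lia.
move=> i hi; case: (ltnP i a) => hia.
  apply/idP; have : nth 0 h i <= nth 0 h d by apply: sorted_le; rewrite ?hs; lia.
  lia.
apply/negbTE; rewrite -leqNgt.
have : nth 0 h a <= nth 0 h i by apply: sorted_le; rewrite ?hs.
lia.
Qed.

Theorem mainTheorem2 (w w' : seq bool) :
  (G w <> idperm (size w) ->
     (contains_pattern (G w') (G w) <-> subseq w w')) /\
  (G w = idperm (size w) ->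
     (contains_pattern (G w') (idperm (size w)) <->
      exists j, j <= size w /\
        subseq (nseq j false ++ nseq (size w - j) true) w')).
Proof.
split.
- move=> hne; split; last exact: L2.
  move=> [h [hs hsort hall hc]]; rewrite size_G in hs hc.
  apply: (L1 hs hall hc).
  exact: (L3 hne hs hsort hall hc).
- move=> hid; split.
  + move=> [h [hs hsort hall hc]]; rewrite /idperm size_iota in hs hc.
    set k := size w in hs hc *.
    set j := find (fun x => size (Zs w') <= x) h.
    have hj : j <= k by rewrite -hs find_size.
    exists j; split => //.
    have [hG hZ] := G_u hj.
    have su : size (nseq j false ++ nseq (k - j) true) = k.
      by rewrite size_cat !size_nseq; lia.
    apply: (L1 (h := h)).
    * by rewrite su.
    * exact: hall.
    * by rewrite hG su.
    * rewrite su hZ => i hi.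
      case: (ltnP i j) => hij.
        have := before_find 0 hij; rewrite /= => /negbT; rewrite -ltnNge => ->.
        by [].
      have hjs : j < size h by lia.
      have hhas : has (fun x => size (Zs w') <= x) h by rewrite has_find.
      have hA := nth_find 0 hhas; rewrite -/j /= in hA.
      have his : i < size h by rewrite hs.
      have hle := sorted_le hsort hij his.
      by apply/negbTE; rewrite -leqNgt; exact: leq_trans hA hle.
  + move=> [j [hj hsub]]; have := L2 hsub.
    by have [-> _] := G_u hj.
Qed.
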